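(* Let $\Phi$ be the root system of type $A_{n-1}$ and let $d\le n$ be a positive integer. Then \[ \operatorname{Var}(\mathcal{X}_{\Phi^+_{=d}})=\begin{cases}\frac{1}{12}(n+d) & \text{if } 2d\le n,\\ \frac14(n-d) & \text{if } 2d\ge n,\end{cases} \] \[ \operatorname{Var}(\mathcal{X}_{\Phi^+_{\le d}})=\begin{cases}\frac{1}{18}d^3+\frac1{24}d^2+(\frac1{12}n-\frac1{72})d & \text{if } 2d\le n,\\ -\frac16 d^3+(\frac13 n-\frac7{24})d^2+(-\frac16 n^2+\frac5{12}n-\frac18)d+(\frac1{36}n^3-\frac1{12}n^2+\frac1{18}n) & \text{if } 2d\ge n.\end{cases} \]
   Context: Type $A_{n-1}$ is realized in $\mathbb{R}^n$ with standard basis $e_1,\dots,e_n$: simple roots $e_{i+1}-e_i$ ($1\le i<n$), positive roots $e_j-e_i$ ($1\le i<j\le n$), all roots $e_j-e_i$ ($i\ne j$); the height of $e_j-e_i$ is $j-i$. The Weyl group $W$ is the symmetric group $\mathcal{S}_n$ permuting coordinates. $\Phi^+_{=d}$ (resp. $\Phi^+_{\le d}$) is the set of positive roots of height exactly $d$ (resp. at most $d$). For $\beta\in\Phi^+$, $\mathcal{X}_\beta$ is the Bernoulli random variable on $W$ (uniform) with $\mathcal{X}_\beta(w)=1$ if $w(\beta)$ is a negative root and $0$ otherwise; $\mathcal{X}_\Psi=\sum_{\beta\in\Psi}\mathcal{X}_\beta$. *)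

(* Defs.v *)
From HB Require Import structures.
From mathcomp Require Import all_boot all_order all_algebra all_fingroup.
Set Implicit Arguments. Unset Strict Implicit. Unset Printing Implicit Defensive.
Import Order.TTheory GRing.Theory Num.Theory.
Local Open Scope ring_scope.

(* Type A_{n-1} in R^n with basis e_0..e_{n-1} (0-based indices).
   The root e_j - e_i is encoded by the pair (i, j), i <> j; it is positive
   iff i < j, with height j - i.  W = S_n acts by permuting coordinates:
   w (e_j - e_i) = e_{w j} - e_{w i}, which is negative iff w j < w i. *)

Definition posroot n (p : 'I_n * 'I_n) : bool := (p.1 < p.2)%N.
Definition height n (p : 'I_n * 'I_n) : nat := (p.2 - p.1)%N.

Definition negroot_image n (w : 'S_n) (p : 'I_n * 'I_n) : bool :=
  (w p.2 < w p.1)%N.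

Definition Xbeta n (p : 'I_n * 'I_n) (w : 'S_n) : nat := negroot_image w p.

Definition XPsi n (P : pred ('I_n * 'I_n)) (w : 'S_n) : nat :=
  (\sum_(p : 'I_n * 'I_n | posroot p && P p) Xbeta p w)%N.

Definition Phi_eq (n : nat) (d : nat) : pred ('I_n * 'I_n) := fun p => height p == d.
Definition Phi_le (n : nat) (d : nat) : pred ('I_n * 'I_n) := fun p => (height p <= d)%N.

Definition Expect n (X : 'S_n -> rat) : rat :=
  (\sum_(w : 'S_n) X w) / #|{perm 'I_n}|%:R.
Definition Var n (X : 'S_n -> nat) : rat :=
  Expect (fun w => (X w)%:R ^+ 2) - (Expect (fun w => (X w)%:R)) ^+ 2.
Arguments Phi_eq : clear implicits.
Arguments Phi_le : clear implicits.

(* Main.v *)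
Require Import Defs.
From HB Require Import structures.
From mathcomp Require Import all_boot all_order all_algebra all_fingroup.
From mathcomp Require Import zify ring lra.
Set Implicit Arguments. Unset Strict Implicit. Unset Printing Implicit Defensive.
Import Order.TTheory GRing.Theory Num.Theory.

Definition cnt n (P : 'S_n -> bool) : nat := (\sum_(w : 'S_n) nat_of_bool (P w))%N.

Lemma cnt_reindex n (P : 'S_n -> bool) (h : 'S_n -> 'S_n) :
  injective h -> cnt P = cnt (fun w => P (h w)).
Proof. by move=> hi; rewrite /cnt (reindex_inj hi). Qed.

Lemma cnt_all n : (\sum_(w : 'S_n) 1)%N = #|{perm 'I_n}|.
Proof. by rewrite sum1_card. Qed.

Lemma permv_neq n (w : 'S_n) (a b : 'I_n) : a != b -> (w a : nat) != w b.
Proof. by move=> ab; apply: contra ab => /eqP/val_inj/perm_inj ->. Qed.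

Lemma tperm_act n (a b : 'I_n) (w : 'S_n) x : ((tperm a b * w)%g) x = w (tperm a b x).
Proof. by rewrite permM. Qed.

Lemma cnt2 n (a b : 'I_n) : a != b ->
  (2 * cnt (fun w : 'S_n => (w a < w b)%N))%N = #|{perm 'I_n}|.
Proof.
move=> ab.
have E : cnt (fun w : 'S_n => (w a < w b)%N) = cnt (fun w : 'S_n => (w b < w a)%N).
  rewrite (cnt_reindex _ (mulgI (tperm a b))) /cnt; apply eq_bigr => w _.
  by rewrite !tperm_act tpermL tpermR.
rewrite mul2n -addnn {2}E /cnt -big_split -cnt_all; apply eq_bigr => w _ /=.
have := permv_neq w ab; lia.
Qed.

Lemma cnt3max n (a b c : 'I_n) : a != b -> a != c -> b != c ->
  (3 * cnt (fun w : 'S_n => (w b < w a)%N && (w c < w a)%N))%N = #|{perm 'I_n}|.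
Proof.
move=> ab ac bc.
have E1 : cnt (fun w : 'S_n => (w b < w a)%N && (w c < w a)%N) =
          cnt (fun w : 'S_n => (w a < w b)%N && (w c < w b)%N).
  rewrite (cnt_reindex _ (mulgI (tperm a b))) /cnt; apply eq_bigr => w _.
  by rewrite !tperm_act tpermL tpermR tpermD // eq_sym.
have E2 : cnt (fun w : 'S_n => (w b < w a)%N && (w c < w a)%N) =
          cnt (fun w : 'S_n => (w a < w c)%N && (w b < w c)%N).
  rewrite (cnt_reindex _ (mulgI (tperm a c))) /cnt; apply eq_bigr => w _.
  rewrite !tperm_act tpermL tpermR tpermD //; last by rewrite eq_sym.
  by rewrite andbC.
rewrite mulSn mul2n -addnn {2}E1 {2}E2 /cnt -!big_split -cnt_all; apply eq_bigr => w _ /=.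
have := permv_neq w ab; have := permv_neq w ac; have := permv_neq w bc; lia.
Qed.

Definition revp n : 'S_n := perm (@rev_ord_inj n).

Lemma revp_lt n (w : 'S_n) x y : ((w * revp n)%g x < (w * revp n)%g y)%N = (w y < w x)%N.
Proof.
rewrite !permM !permE /=. have := ltn_ord (w x); have := ltn_ord (w y); lia.
Qed.

Lemma cnt3min n (a b c : 'I_n) : a != b -> a != c -> b != c ->
  (3 * cnt (fun w : 'S_n => (w a < w b)%N && (w a < w c)%N))%N = #|{perm 'I_n}|.
Proof.
move=> ab ac bc; rewrite (cnt_reindex _ (mulIg (revp n))) -(cnt3max ab ac bc) /cnt.
congr (_ * _)%N; apply eq_bigr => w _; by rewrite !revp_lt.
Qed.

Lemma cnt3chain n (a b c : 'I_n) : a != b -> a != c -> b != c ->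
  (6 * cnt (fun w : 'S_n => (w c < w b)%N && (w b < w a)%N))%N = #|{perm 'I_n}|.
Proof.
move=> ab ac bc.
have E : cnt (fun w : 'S_n => (w c < w b)%N && (w b < w a)%N) =
         cnt (fun w : 'S_n => (w b < w c)%N && (w c < w a)%N).
  have ba : b != a by rewrite eq_sym.
  have ca : c != a by rewrite eq_sym.
  rewrite (cnt_reindex _ (mulgI (tperm b c))) /cnt; apply eq_bigr => w _.
  by rewrite !tperm_act tpermL tpermR (tpermD ba ca).
have F : (cnt (fun w : 'S_n => (w c < w b)%N && (w b < w a)%N) +
         cnt (fun w : 'S_n => (w b < w c)%N && (w c < w a)%N))%N =
         cnt (fun w : 'S_n => (w b < w a)%N && (w c < w a)%N).
  rewrite /cnt -big_split; apply eq_bigr => w _ /=.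
  have := permv_neq w bc; lia.
rewrite -(cnt3max ab ac bc) -F -E; lia.
Qed.

Lemma cnt4 n (a b c e : 'I_n) : a != b -> c != e -> a != c -> a != e -> b != c -> b != e ->
  (4 * cnt (fun w : 'S_n => (w b < w a)%N && (w e < w c)%N))%N = #|{perm 'I_n}|.
Proof.
move=> ab ce ac ae bc be.
have E : cnt (fun w : 'S_n => (w b < w a)%N && (w e < w c)%N) =
         cnt (fun w : 'S_n => (w a < w b)%N && (w e < w c)%N).
  rewrite (cnt_reindex _ (mulgI (tperm a b))) /cnt; apply eq_bigr => w _.
  by rewrite !tperm_act tpermL tpermR !tpermD.
have F : (cnt (fun w : 'S_n => (w b < w a)%N && (w e < w c)%N) +
         cnt (fun w : 'S_n => (w a < w b)%N && (w e < w c)%N))%N =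
         cnt (fun w : 'S_n => (w e < w c)%N).
  rewrite /cnt -big_split; apply eq_bigr => w _ /=.
  have := permv_neq w ab; lia.
have ec : e != c by rewrite eq_sym.
rewrite -(cnt2 ec) -F -E; lia.
Qed.

Local Open Scope ring_scope.

Definition both n (b g : 'I_n * 'I_n) :=
  cnt (fun w : 'S_n => (w b.2 < w b.1)%N && (w g.2 < w g.1)%N).

Lemma Npos n : (0 < #|{perm 'I_n}|)%N.
Proof. by rewrite card_Sn fact_gt0. Qed.

Lemma ratio k c N : (k * c = N)%N -> (0 < N)%N -> (c%:R / N%:R : rat) = 1 / k%:R.
Proof.
move=> <- hp; rewrite natrM.
have k0 : (k%:R : rat) != 0 by rewrite pnatr_eq0; apply/eqP => k0; move: hp; rewrite k0.
have c0 : (c%:R : rat) != 0 by rewrite pnatr_eq0; apply/eqP => c0; move: hp; rewrite c0 muln0.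
by field; rewrite k0 c0.
Qed.

Lemma lt_neqF n (i j : 'I_n) : (i < j)%N -> (i == j) = false.
Proof. by move=> h; apply/eqP => E; rewrite E ltnn in h. Qed.

Lemma cov n (b g : 'I_n * 'I_n) : posroot b -> posroot g ->
  (both b g)%:R / #|{perm 'I_n}|%:R =
  1/4 + 1/12 * ((b == g)%:R + (b.1 == g.1)%:R - (b.1 == g.2)%:R
               - (b.2 == g.1)%:R + (b.2 == g.2)%:R) :> rat.
Proof.
case: b => i j; case: g => k l; rewrite /posroot /both /= => ij kl.
have ijF := lt_neqF ij; have klF := lt_neqF kl.
have jiF : (j == i) = false by rewrite eq_sym.
have lkF : (l == k) = false by rewrite eq_sym.
have NP := Npos n.
rewrite xpair_eqE.
case: (eqVneq i k) => [E | ik].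
  subst k.
  case: (eqVneq j l) => [E | jl].
    subst l.
    rewrite ijF jiF /=.
    have -> : cnt (fun w : 'S_n => (w j < w i)%N && (w j < w i)%N) =
              cnt (fun w : 'S_n => (w j < w i)%N) by apply eq_bigr => w _; rewrite andbb.
    rewrite (ratio (cnt2 (negbT jiF)) NP). by field.
  have ilF : (i == l) = false by exact: lt_neqF kl.
  rewrite ilF jiF /=.
  rewrite (ratio (cnt3max (negbT ijF) (negbT ilF) jl) NP). by field.
case: (eqVneq j l) => [E | jl].
  subst l.
  have kjF : (k == j) = false by exact: lt_neqF kl.
  have jkF : (j == k) = false by rewrite eq_sym.
  rewrite ?ijF ?jkF /=.
  rewrite (ratio (cnt3min (negbT jiF) (negbT jkF) ik) NP). by field.
case: (eqVneq j k) => [E | jk].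
  subst k.
  have ilF : (i == l) = false by exact: lt_neqF (ltn_trans ij kl).
  rewrite ?ijF ?ilF ?(negbTE jl) /=.
  have -> : cnt (fun w : 'S_n => (w j < w i)%N && (w l < w j)%N) =
            cnt (fun w : 'S_n => (w l < w j)%N && (w j < w i)%N) by apply eq_bigr => w _; rewrite andbC.
  rewrite (ratio (cnt3chain (negbT ijF) (negbT ilF) jl) NP). by field.
case: (eqVneq i l) => [E | il].
  subst l.
  have kjF : (k == j) = false by exact: lt_neqF (ltn_trans kl ij).
  rewrite ?(negbTE ik) ?jiF ?(negbTE jk) /=.
  have kiF : (k == i) = false by rewrite eq_sym (negbTE ik).
  rewrite (ratio (cnt3chain (negbT kiF) (negbT kjF) (negbT ijF)) NP). by field.
rewrite ?(negbTE ik) ?(negbTE jk) ?(negbTE jl) ?(negbTE il) /=.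
rewrite (ratio (cnt4 (negbT ijF) (negbT klF) ik il jk jl) NP). by field.
Qed.


Lemma var_decomp n (Q : pred ('I_n * 'I_n)) :
  Var (XPsi Q) = \sum_(b | posroot b && Q b) \sum_(g | posroot g && Q g)
      ((both b g)%:R / #|{perm 'I_n}|%:R - 1/4).
Proof.
set P := fun b => posroot b && Q b.
set N : rat := #|{perm 'I_n}|%:R.
have NP := Npos n.
have N0 : N != 0 by rewrite pnatr_eq0 -lt0n.
rewrite /Var /Expect /XPsi.
have A : forall w : 'S_n, ((\sum_(b | P b) Xbeta b w)%N%:R : rat) ^+ 2 =
   \sum_(b | P b) \sum_(g | P g) ((Xbeta b w * Xbeta g w)%N%:R).
  move=> w; rewrite natr_sum expr2 mulr_suml; apply eq_bigr => b _.
  rewrite mulr_sumr; apply eq_bigr => g _; by rewrite natrM.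
have D : forall b g, \sum_(w : 'S_n) (Xbeta b w * Xbeta g w)%N%:R = (both b g)%:R :> rat.
  move=> b g; rewrite -natr_sum; congr (_ %:R); apply eq_bigr => w _.
  by rewrite /Xbeta mulnb.
have E2 : \sum_(w : 'S_n) ((\sum_(b | P b) Xbeta b w)%N%:R : rat) ^+ 2 =
          \sum_(b | P b) \sum_(g | P g) (both b g)%:R.
  rewrite (eq_bigr _ (fun w _ => A w)) exchange_big; apply eq_bigr => b _.
  rewrite exchange_big; apply eq_bigr => g _; exact: D.
have E1 : \sum_(w : 'S_n) ((\sum_(b | P b) Xbeta b w)%N%:R : rat) =
          \sum_(b | P b) \sum_(w : 'S_n) (Xbeta b w)%:R.
  rewrite exchange_big; apply eq_bigr => w _; by rewrite natr_sum.
have C : forall b, P b -> (\sum_(w : 'S_n) (Xbeta b w)%:R) / N = 1/2 :> rat.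
  move=> b /andP[pb _]. rewrite -natr_sum.
  have ne : b.2 != b.1 by rewrite eq_sym lt_neqF.
  have -> : (\sum_(w : 'S_n) Xbeta b w)%N = cnt (fun w : 'S_n => (w b.2 < w b.1)%N) by [].
  by rewrite /N (ratio (cnt2 ne) NP).
rewrite E2 E1 -/N [X in _ - X ^+ 2]mulr_suml (eq_bigr _ C) mulr_suml.
rewrite expr2 mulr_suml -sumrB; apply eq_bigr => b _.
rewrite mulr_suml mulr_sumr -sumrB; apply eq_bigr => g _.
congr (_ - _); field.
Qed.


Lemma sum_s1 n (x : 'I_n) : \sum_(j : 'I_n) ((x == j)%:R : rat) = 1.
Proof.
rewrite (bigD1 x) //= eqxx big1 ?addr0 // => j /negbTE.
by rewrite eq_sym => ->.
Qed.

Lemma sum_s2 n (x y : 'I_n) :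
  \sum_(j : 'I_n) ((x == j)%:R * (y == j)%:R : rat) = (x == y)%:R.
Proof.
rewrite (bigD1 x) //= eqxx mul1r big1 ?addr0 1?eq_sym // => j /negbTE.
by rewrite eq_sym => ->; rewrite mul0r.
Qed.

Definition cc n (Q : pred ('I_n * 'I_n)) (j : 'I_n) : nat :=
  (\sum_(b | posroot b && Q b) (b.1 == j))%N.
Definition rr n (Q : pred ('I_n * 'I_n)) (j : 'I_n) : nat :=
  (\sum_(b | posroot b && Q b) (b.2 == j))%N.

Lemma var_formula n (Q : pred ('I_n * 'I_n)) :
  Var (XPsi Q) = 1/12 * (\sum_(j : 'I_n) (cc Q j)%:R
                         + \sum_(j : 'I_n) ((cc Q j)%:R - (rr Q j)%:R) ^+ 2).
Proof.
set P := fun b => posroot b && Q b.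
set s := fun (x y : 'I_n) => ((x == y)%:R : rat).
rewrite var_decomp.
have E : forall b, P b -> \sum_(g | P g) ((both b g)%:R / #|{perm 'I_n}|%:R - 1/4) =
   1/12 * \sum_(g | P g) (((b == g)%:R : rat) + (s b.1 g.1 - s b.1 g.2 - s b.2 g.1 + s b.2 g.2)).
  move=> b /andP[pb _]; rewrite mulr_sumr; apply eq_bigr => g /andP[pg _].
  rewrite (cov pb pg) /s; ring.
rewrite (eq_bigr _ E) -mulr_sumr; congr (_ * _).
have L1 : \sum_(b | P b) \sum_(g | P g) ((b == g)%:R : rat) = \sum_(j : 'I_n) (cc Q j)%:R.
  transitivity (\sum_(b | P b) \sum_(j : 'I_n) s b.1 j).
    apply eq_bigr => b Pb; rewrite sum_s1 (bigD1 b) //= eqxx big1 ?addr0 // => g /andP[_ /negbTE].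
    by rewrite eq_sym => ->.
  rewrite exchange_big; apply eq_bigr => j _; by rewrite /cc natr_sum.
have L2 : \sum_(b | P b) \sum_(g | P g) (s b.1 g.1 - s b.1 g.2 - s b.2 g.1 + s b.2 g.2) =
          \sum_(j : 'I_n) ((cc Q j)%:R - (rr Q j)%:R) ^+ 2.
  symmetry.
  transitivity (\sum_(j : 'I_n) \sum_(b | P b) \sum_(g | P g) ((s b.1 j - s b.2 j) * (s g.1 j - s g.2 j))).
    apply eq_bigr => j _; rewrite /cc /rr !natr_sum -sumrB expr2 mulr_suml; apply eq_bigr => b _.
    by rewrite mulr_sumr.
  rewrite exchange_big; apply eq_bigr => b _; rewrite exchange_big; apply eq_bigr => g _.
  rewrite /s.
  under eq_bigr => j _ do rewrite mulrBl !mulrBr.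
  rewrite !sumrB !sum_s2; ring.
transitivity (\sum_(b | P b) \sum_(g | P g) ((b == g)%:R : rat) +
   \sum_(b | P b) \sum_(g | P g) (s b.1 g.1 - s b.1 g.2 - s b.2 g.1 + s b.2 g.2)).
  rewrite -big_split; apply eq_bigr => b _; by rewrite -big_split.
congr (_ + _); [exact: L1 | exact: L2].
Qed.


Local Close Scope ring_scope.
Lemma cc_gen n (H : pred nat) (j : 'I_n) :
  (\sum_(b : 'I_n * 'I_n | (b.1 < b.2) && H (b.2 - b.1)) (b.1 == j) =
   \sum_(k < n) ((j < k) && H (k - j)))%N.
Proof.
rewrite big_mkcond /=.
rewrite -(pair_big xpredT xpredT (fun i k : 'I_n =>
           if (i < k) && H (k - i) then nat_of_bool (i == j) else 0%N)) /=.
rewrite (bigD1 j) //= [X in (_ + X)%N]big1 ?addn0.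
  by apply eq_bigr => k _; rewrite eqxx; case: ifP.
move=> i /negbTE ij; apply big1 => k _; by rewrite ij; case: ifP.
Qed.

Lemma rr_gen n (H : pred nat) (j : 'I_n) :
  (\sum_(b : 'I_n * 'I_n | (b.1 < b.2) && H (b.2 - b.1)) (b.2 == j) =
   \sum_(i < n) ((i < j) && H (j - i)))%N.
Proof.
rewrite big_mkcond /=.
rewrite -(pair_big xpredT xpredT (fun i k : 'I_n =>
           if (i < k) && H (k - i) then nat_of_bool (k == j) else 0%N)) /=.
apply eq_bigr => i _.
rewrite (bigD1 j) //= [X in (_ + X)%N]big1 ?addn0.
  by rewrite eqxx; case: ifP.
move=> k /negbTE kj; by rewrite kj; case: ifP.
Qed.

Lemma cntA1 d j m : (0 < d)%N ->
  (\sum_(k < m) ((j < k) && (k - j == d)))%N = (j + d < m)%N.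
Proof.
move=> d0; elim: m => [|m IH]; first by rewrite big_ord0.
rewrite big_ord_recr /= IH; lia.
Qed.

Lemma cntA2 d j m :
  (\sum_(k < m) ((j < k) && (k - j <= d)))%N = minn d (m - 1 - j).
Proof.
elim: m => [|m IH]; first by rewrite big_ord0.
rewrite big_ord_recr /= IH; lia.
Qed.

Lemma cntB1 d j m : (0 < d)%N ->
  (\sum_(i < m) ((i < j) && (j - i == d)))%N = (d <= j)%N && (j - d < m)%N.
Proof.
move=> d0; elim: m => [|m IH]; first by rewrite big_ord0; lia.
rewrite big_ord_recr /= IH; lia.
Qed.

Lemma cntB2 d j m :
  (\sum_(i < m) ((i < j) && (j - i <= d)))%N = (minn j m - (j - d))%N.
Proof.
elim: m => [|m IH]; first by rewrite big_ord0; lia.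
rewrite big_ord_recr /= IH; lia.
Qed.

Lemma cc_eq n d (j : 'I_n) : (0 < d)%N -> cc (Phi_eq n d) j = (j + d < n)%N.
Proof. move=> d0; exact: (etrans (cc_gen (fun h => h == d) j) (cntA1 _ _ d0)). Qed.

Lemma rr_eq n d (j : 'I_n) : (0 < d)%N -> rr (Phi_eq n d) j = (d <= j)%N.
Proof.
move=> d0; rewrite /rr (rr_gen (fun h => h == d) j) cntB1 //.
have := ltn_ord j; lia.
Qed.

Lemma cc_le n d (j : 'I_n) : cc (Phi_le n d) j = minn d (n - 1 - j).
Proof. exact: (etrans (cc_gen (fun h => h <= d)%N j) (cntA2 _ _ _)). Qed.

Lemma rr_le n d (j : 'I_n) : rr (Phi_le n d) j = minn d j.
Proof.
rewrite /rr (rr_gen (fun h => h <= d)%N j) cntB2.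
have := ltn_ord j; lia.
Qed.


Local Open Scope ring_scope.
Definition S2 (m : rat) := (m - 1) * m * (2 * m - 1) / 6.

Lemma sumsq a b (u v : rat) : (a <= b)%N ->
  \sum_(a <= j < b) (u + v * j%:R) ^+ 2 =
  u ^+ 2 * (b%:R - a%:R) + u * v * (b%:R * (b%:R - 1) - a%:R * (a%:R - 1))
  + v ^+ 2 * (S2 b%:R - S2 a%:R).
Proof.
move/subnK => <-; elim: (b - a)%N => [|m IH].
  by rewrite add0n big_geq // /S2; ring.
rewrite addSn big_nat_recr /=; last by rewrite leq_addl.
rewrite IH /S2 -natr1 !natrD; by field.
Qed.

Lemma sumlin a b (u v : rat) : (a <= b)%N ->
  \sum_(a <= j < b) (u + v * j%:R) =
  u * (b%:R - a%:R) + v * (b%:R * (b%:R - 1) - a%:R * (a%:R - 1)) / 2.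
Proof.
move/subnK => <-; elim: (b - a)%N => [|m IH].
  by rewrite add0n big_geq //; ring.
rewrite addSn big_nat_recr /=; last by rewrite leq_addl.
rewrite IH -natr1 !natrD; by field.
Qed.

Lemma sumcst a b (u : rat) : (a <= b)%N -> \sum_(a <= j < b) u = u * (b%:R - a%:R).
Proof. by move=> ab; rewrite sumr_const_nat -natrB // mulr_natr. Qed.


Lemma var_eq_formula n d : (0 < d)%N -> Var (XPsi (Phi_eq n d)) =
  1/12 * (\sum_(0 <= j < n) ((j + d < n)%N%:R : rat)
          + \sum_(0 <= j < n) (((j + d < n)%N%:R - (d <= j)%N%:R) ^+ 2)).
Proof.
move=> d0; rewrite var_formula; congr (_ * (_ + _)); rewrite big_mkord; apply eq_bigr => j _.
  by rewrite cc_eq.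
by rewrite cc_eq // rr_eq.
Qed.

Lemma var_le_formula n d : Var (XPsi (Phi_le n d)) =
  1/12 * (\sum_(0 <= j < n) ((minn d (n - 1 - j))%:R : rat)
          + \sum_(0 <= j < n) (((minn d (n - 1 - j))%:R - (minn d j)%:R) ^+ 2)).
Proof.
rewrite var_formula; congr (_ * (_ + _)); rewrite big_mkord; apply eq_bigr => j _.
  by rewrite cc_le.
by rewrite cc_le rr_le.
Qed.

Lemma sumC1 n d : (d <= n)%N -> \sum_(0 <= j < n) ((j + d < n)%N%:R : rat) = (n - d)%N%:R.
Proof.
move=> dn.
rewrite (big_cat_nat (leq0n (n-d)) (leq_subr d n)) /=.
rewrite (@eq_big_nat _ _ _ 0 (n-d) _ (fun=> 1)); last first.
  by move=> j /andP[_ h]; have -> : (j + d < n)%N = true by lia.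
rewrite (@eq_big_nat _ _ _ (n-d) n _ (fun=> 0)); last first.
  by move=> j /andP[h _]; have -> : (j + d < n)%N = false by lia.
rewrite !sumcst ?leq_subr // mul0r addr0 mul1r subr0 natrB //.
Qed.

Lemma var_eq_small n d : (0 < d)%N -> (2 * d <= n)%N ->
  Var (XPsi (Phi_eq n d)) = (n%:R + d%:R) / 12.
Proof.
move=> d0 h; rewrite var_eq_formula // sumC1; last lia.
have e2 : (d <= n - d)%N by lia. have e3 : (n - d <= n)%N by lia.
rewrite (big_cat_nat (leq0n d) (leq_trans e2 e3)) /=.
rewrite (big_cat_nat e2 e3) /=.
rewrite (@eq_big_nat _ _ _ 0 d _ (fun=> 1)); last first.
  move=> j /andP[_ h1]; have -> : (j + d < n)%N = true by lia.
  by have -> : (d <= j)%N = false by lia.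
rewrite (@eq_big_nat _ _ _ d (n-d) _ (fun=> 0)); last first.
  move=> j /andP[h1 h2]; have -> : (j + d < n)%N = true by lia.
  by have -> : (d <= j)%N = true by lia; rewrite subrr expr0n.
rewrite (@eq_big_nat _ _ _ (n-d) n _ (fun=> 1)); last first.
  move=> j /andP[h1 h2]; have -> : (j + d < n)%N = false by lia.
  by have -> : (d <= j)%N = true by lia; rewrite sub0r sqrrN expr1n.
rewrite !sumcst // natrB; last lia.
by field.
Qed.

Lemma var_eq_large n d : (0 < d)%N -> (d <= n)%N -> (n <= 2 * d)%N ->
  Var (XPsi (Phi_eq n d)) = (n%:R - d%:R) / 4.
Proof.
move=> d0 dn h; rewrite var_eq_formula // sumC1 //.
have e2 : (n - d <= d)%N by lia. have e3 : (d <= n)%N by lia.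
rewrite (big_cat_nat (leq0n (n - d)) (leq_trans e2 e3)) /=.
rewrite (big_cat_nat e2 e3) /=.
rewrite (@eq_big_nat _ _ _ 0 (n-d) _ (fun=> 1)); last first.
  move=> j /andP[_ h1]; have -> : (j + d < n)%N = true by lia.
  by have -> : (d <= j)%N = false by lia.
rewrite (@eq_big_nat _ _ _ (n-d) d _ (fun=> 0)); last first.
  move=> j /andP[h1 h2]; have -> : (j + d < n)%N = false by lia.
  by have -> : (d <= j)%N = false by lia; rewrite subrr expr0n.
rewrite (@eq_big_nat _ _ _ d n _ (fun=> 1)); last first.
  move=> j /andP[h1 h2]; have -> : (j + d < n)%N = false by lia.
  by have -> : (d <= j)%N = true by lia; rewrite sub0r sqrrN expr1n.
rewrite !sumcst // ?leq0n // natrB //.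
by field.
Qed.

Lemma natr_n1j n j : (j < n)%N -> ((n - 1 - j)%N%:R : rat) = n%:R - 1 - j%:R.
Proof. move=> h; rewrite -subnDA natrB; last lia. rewrite natrD; ring. Qed.

Lemma sumCle n d : (d <= n)%N ->
  \sum_(0 <= j < n) ((minn d (n - 1 - j))%:R : rat) =
  d%:R * (n%:R - d%:R) + ((n%:R - 1) * (n%:R - (n%:R - d%:R))
     + (-1) * (n%:R * (n%:R - 1) - (n%:R - d%:R) * (n%:R - d%:R - 1)) / 2).
Proof.
move=> dn.
rewrite (big_cat_nat (leq0n (n-d)) (leq_subr d n)) /=.
rewrite (@eq_big_nat _ _ _ 0 (n-d) _ (fun=> d%:R)); last first.
  by move=> j /andP[_ h]; have -> : minn d (n - 1 - j) = d by lia.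
rewrite (@eq_big_nat _ _ _ (n-d) n _ (fun j => (n%:R - 1) + (-1) * j%:R)); last first.
  move=> j /andP[h1 h2]; have -> : minn d (n - 1 - j) = (n - 1 - j)%N by lia.
  rewrite natr_n1j //; ring.
rewrite sumcst // sumlin ?leq_subr // !natrB //.
by rewrite subr0.
Qed.

Lemma var_le_small n d : (0 < d)%N -> (2 * d <= n)%N ->
  Var (XPsi (Phi_le n d)) =
  d%:R ^+ 3 / 18 + d%:R ^+ 2 / 24 + (n%:R / 12 - 1 / 72) * d%:R.
Proof.
move=> d0 h; have dn : (d <= n)%N by lia.
rewrite var_le_formula sumCle //.
have e2 : (d <= n - d)%N by lia. have e3 : (n - d <= n)%N by lia.
rewrite (big_cat_nat (leq0n d) (leq_trans e2 e3)) /=.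
rewrite (big_cat_nat e2 e3) /=.
rewrite (@eq_big_nat _ _ _ 0 d _ (fun j => (d%:R + (-1) * j%:R) ^+ 2)); last first.
  move=> j /andP[_ h1]; have -> : minn d (n - 1 - j) = d by lia.
  have -> : minn d j = j by lia. ring.
rewrite (@eq_big_nat _ _ _ d (n-d) _ (fun=> 0)); last first.
  move=> j /andP[h1 h2]; have -> : minn d (n - 1 - j) = d by lia.
  have -> : minn d j = d by lia.
  by rewrite subrr expr0n.
rewrite (@eq_big_nat _ _ _ (n-d) n _ (fun j => ((n%:R - 1 - d%:R) + (-1) * j%:R) ^+ 2)); last first.
  move=> j /andP[h1 h2]; have -> : minn d (n - 1 - j) = (n - 1 - j)%N by lia.
  have -> : minn d j = d by lia. rewrite natr_n1j //; ring.
rewrite !sumsq // sumcst // natrB // /S2.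
by field.
Qed.

Lemma var_le_large n d : (0 < d)%N -> (d <= n)%N -> (n <= 2 * d)%N ->
  Var (XPsi (Phi_le n d)) =
      - (d%:R ^+ 3 / 6) + (n%:R / 3 - 7 / 24) * d%:R ^+ 2
      + (- (n%:R ^+ 2 / 6) + 5 / 12 * n%:R - 1 / 8) * d%:R
      + (n%:R ^+ 3 / 36 - n%:R ^+ 2 / 12 + n%:R / 18).
Proof.
move=> d0 dn h.
rewrite var_le_formula sumCle //.
have e2 : (n - d <= d)%N by lia.
rewrite (big_cat_nat (leq0n (n - d)) (leq_trans e2 dn)) /=.
rewrite (big_cat_nat e2 dn) /=.
rewrite (@eq_big_nat _ _ _ 0 (n-d) _ (fun j => (d%:R + (-1) * j%:R) ^+ 2)); last first.
  move=> j /andP[_ h1]; have -> : minn d (n - 1 - j) = d by lia.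
  have -> : minn d j = j by lia. ring.
rewrite (@eq_big_nat _ _ _ (n-d) d _ (fun j => ((n%:R - 1) + (-2) * j%:R) ^+ 2)); last first.
  move=> j /andP[h1 h2]; have -> : minn d (n - 1 - j) = (n - 1 - j)%N by lia.
  have -> : minn d j = j by lia. rewrite natr_n1j; [ring | lia].
rewrite (@eq_big_nat _ _ _ d n _ (fun j => ((n%:R - 1 - d%:R) + (-1) * j%:R) ^+ 2)); last first.
  move=> j /andP[h1 h2]; have -> : minn d (n - 1 - j) = (n - 1 - j)%N by lia.
  have -> : minn d j = d by lia. rewrite natr_n1j //; ring.
rewrite !sumsq // natrB // /S2.
by field.
Qed.


Theorem theoremA1 (n d : nat) (hd0 : (0 < d)%N) (hdn : (d <= n)%N) :
  let N : rat := n%:R in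
  let D : rat := d%:R in
  ((2 * d <= n)%N -> Var (XPsi (Phi_eq n d)) = (N + D) / 12) /\
  ((n <= 2 * d)%N -> Var (XPsi (Phi_eq n d)) = (N - D) / 4) /\
  ((2 * d <= n)%N -> Var (XPsi (Phi_le n d)) =
      D ^+ 3 / 18 + D ^+ 2 / 24 + (N / 12 - 1 / 72) * D) /\
  ((n <= 2 * d)%N -> Var (XPsi (Phi_le n d)) =
      - (D ^+ 3 / 6) + (N / 3 - 7 / 24) * D ^+ 2
      + (- (N ^+ 2 / 6) + 5 / 12 * N - 1 / 8) * D
      + (N ^+ 3 / 36 - N ^+ 2 / 12 + N / 18)).
Proof.
move=> N D; rewrite /N /D.
split; first by move=> h; exact: var_eq_small.
split; first by move=> h; exact: var_eq_large.
split; first by move=> h; exact: var_le_small.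
by move=> h; exact: var_le_large.
Qed.
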